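(* For $r>0$, the sphere $\mathcal S_r=\{t\in V_N: S(t)=r\}$, regarded as a hypersurface in the quasi-Euclidean space $(V_N\setminus\{0\},n_{pq}(g;t))$ and equipped with the induced metric $\gamma$, is a space of constant curvature $h^2/r^2$: its Riemann curvature tensor equals $\frac{h^2}{r^2}(\gamma_{ik}\gamma_{jl}-\gamma_{il}\gamma_{jk})$.
   Context: Let $N\ge2$; points of $V_N=\mathbb{R}^N$ are $t=(t^1,\dots,t^N)$; indices $p,q$ run over $1,\dots,N$, repeated indices summed. $(r_{pq})$ is a symmetric positive-definite matrix with $r_{NN}=1$, $r_{Na}=0$ ($a<N$), and $S(t)=\sqrt{r_{pq}t^pt^q}$. Fix $g\in(-2,2)$, $h=\sqrt{1-g^2/4}$, $G=g/h$. The quasi-Euclidean metric tensor is $n_{pq}(g;t)=\frac1{h^2}r_{pq}-\frac14G^2L_pL_q$ with $L_p=r_{pq}t^q/S(t)$. *)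

(* Defs.v *)
From HB Require Import structures.
From mathcomp Require Import all_boot all_order all_algebra.
From mathcomp Require Import all_classical all_reals all_analysis.
Set Implicit Arguments. Unset Strict Implicit. Unset Printing Implicit Defensive.
Import Order.TTheory GRing.Theory Num.Theory.
Import numFieldNormedType.Exports.
Local Open Scope classical_set_scope.
Local Open Scope ring_scope.

Definition Sfun {R : realType} {N : nat} (rm : 'M[R]_N) (t : 'rV[R]_N) : R :=
  Num.sqrt (\sum_(p < N) \sum_(q < N) rm p q * t 0 p * t 0 q).

Definition hpar {R : realType} (g : R) : R := Num.sqrt (1 - g ^+ 2 / 4).
Definition Gpar {R : realType} (g : R) : R := g / hpar g.

Definition Lvec {R : realType} {N : nat} (rm : 'M[R]_N) (t : 'rV[R]_N) (p : 'I_N) : R :=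
  (\sum_(q < N) rm p q * t 0 q) / Sfun rm t.

Definition nmet {R : realType} {N : nat} (g : R) (rm : 'M[R]_N) (t : 'rV[R]_N)
  (p q : 'I_N) : R :=
  rm p q / hpar g ^+ 2 - (Gpar g) ^+ 2 / 4 * Lvec rm t p * Lvec rm t q.

Fixpoint Ck_on {R : realType} {m p : nat} (k : nat) (U : set 'rV[R]_m)
  (f : 'rV[R]_m -> 'rV[R]_p) : Prop :=
  match k with
  | 0 => forall u, U u -> {for u, continuous f}
  | k'.+1 => (forall u, U u -> differentiable f u) /\
             forall v : 'rV[R]_m, Ck_on k' U ('D_v f)
  end.

Definition smooth_on {R : realType} {m p : nat} (U : set 'rV[R]_m)
  (f : 'rV[R]_m -> 'rV[R]_p) : Prop := forall k, Ck_on k U f.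

Definition ecoord {R : realType} {m : nat} (i : 'I_m) : 'rV[R]_m := delta_mx 0 i.

Definition pd {R : realType} {m : nat} (i : 'I_m) (f : 'rV[R]_m -> R)
  (u : 'rV[R]_m) : R := 'D_(ecoord i) f u.

Definition dchart {R : realType} {m N : nat} (x : 'rV[R]_m -> 'rV[R]_N)
  (i : 'I_m) (u : 'rV[R]_m) : 'rV[R]_N := 'D_(ecoord i) x u.

Definition chart_jacobian {R : realType} {m N : nat} (x : 'rV[R]_m -> 'rV[R]_N)
  (u : 'rV[R]_m) : 'M[R]_(m, N) := \matrix_(i < m, p < N) dchart x i u 0 p.

Definition induced_metric {R : realType} {m N : nat} (g : R) (rm : 'M[R]_N)
  (x : 'rV[R]_m -> 'rV[R]_N) (u : 'rV[R]_m) (i j : 'I_m) : R :=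
  \sum_(p < N) \sum_(q < N)
     nmet g rm (x u) p q * dchart x i u 0 p * dchart x j u 0 q.

Definition metric_inv {R : realType} {m : nat}
  (gam : 'rV[R]_m -> 'I_m -> 'I_m -> R) (u : 'rV[R]_m) : 'M[R]_m :=
  invmx (\matrix_(i < m, j < m) gam u i j).

Definition christoffel {R : realType} {m : nat}
  (gam : 'rV[R]_m -> 'I_m -> 'I_m -> R) (i j k : 'I_m) (u : 'rV[R]_m) : R :=
  2^-1 * \sum_(l < m) metric_inv gam u i l *
     (pd j (fun w => gam w l k) u + pd k (fun w => gam w l j) u
      - pd l (fun w => gam w j k) u).

(* R^i_{jkl} = d_k Gamma^i_{lj} - d_l Gamma^i_{kj}
               + Gamma^i_{km} Gamma^m_{lj} - Gamma^i_{lm} Gamma^m_{kj},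
   i.e. R(d_k,d_l) d_j = R^i_{jkl} d_i with R(X,Y) = [nabla_X,nabla_Y] - nabla_[X,Y];
   lowered: R_{ijkl} = gam_{im} R^m_{jkl}. *)
Definition riemann {R : realType} {m : nat}
  (gam : 'rV[R]_m -> 'I_m -> 'I_m -> R) (i j k l : 'I_m) (u : 'rV[R]_m) : R :=
  \sum_(a < m) gam u i a *
    (pd k (fun w => christoffel gam a l j w) u
     - pd l (fun w => christoffel gam a k j w) u
     + \sum_(b < m) (christoffel gam a k b u * christoffel gam b l j u
                     - christoffel gam a l b u * christoffel gam b k j u)).

(* Main.v *)
Require Import Defs.
From HB Require Import structures.
From mathcomp Require Import all_boot all_order all_algebra.
From mathcomp Require Import all_classical all_reals all_analysis.
From mathcomp Require Import ring lra.
Import Order.TTheory GRing.Theory Num.Theory.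
Import numFieldNormedType.Exports.
Local Open Scope classical_set_scope.
Local Open Scope ring_scope.
Set Implicit Arguments. Unset Strict Implicit. Unset Printing Implicit Defensive.

Section Schwarz.
Context {R : realType} {V : normedModType R}.

Lemma line_is_derive (f : V -> R) (w a : V) (s0 : R) :
  derivable f (s0 *: a + w) a ->
  is_derive s0 1 (fun s : R => f (s *: a + w)) ('D_a f (s0 *: a + w)).
Proof.
move=> df.
have E : (fun h : R => h^-1 *: (((fun s : R => f (s *: a + w)) \o shift s0) (h *: 1)
     - f (s0 *: a + w))) =
   (fun h => h^-1 *: ((f \o shift (s0 *: a + w)) (h *: a) - f (s0 *: a + w))).
  apply/funext => h /=.
  by rewrite -[h *: 1]/(h * 1) mulr1 scalerDl addrA.
apply: DeriveDef; first by rewrite /derivable E.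
by rewrite /derive E.
Qed.

Lemma diff_eps (psi : V -> R) (u : V) : differentiable psi u ->
  forall eps, 0 < eps -> exists2 d, 0 < d & forall h, `|h| < d ->
    `|psi (h + u) - psi u - 'd psi u h| <= eps * `|h|.
Proof.
move=> /diff_locally /eqaddoP H eps e0.
have /nbhs_norm0P [d d0 Hd] := H eps e0.
exists d => // h hd; have := Hd h hd.
by rewrite /= opprD addrA.
Qed.

Lemma near_ball (u : V) (P : V -> Prop) : (\forall w \near u, P w) ->
  exists2 d, 0 < d & forall h, `|h| < d -> P (h + u).
Proof.
move=> /nbhs0P /nbhs_norm0P [d d0 Hd]; exists d => // h hd.
by rewrite addrC; apply: Hd.
Qed.


Lemma schwarz_half (f : V -> R) (u a b : V) :
  (\forall w \near u, derivable f w a) -> differentiable ('D_a f) u ->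
  forall e, 0 < e -> exists2 d, 0 < d & forall t, 0 < t -> t < d ->
   `|(f (t *: a + (t *: b + u)) - f (t *: a + u) - f (t *: b + u) + f u)
      - t^+2 * 'D_b ('D_a f) u| <= e * t^+2.
Proof.
move=> Hd Dpsi e e0.
set psi := 'D_a f.
set K := `|a| + `|b| + 1.
have K0 : 0 < K by rewrite /K ltr_wpDl // addr_ge0.
set C := 2 * `|a| + `|b| + 1.
have C0 : 0 < C by rewrite /C ltr_wpDl // addr_ge0 // mulr_ge0.
have [d1 d10 H1] := diff_eps Dpsi (divr_gt0 e0 C0).
have [d2 d20 H2] := near_ball Hd.
exists (Num.min d1 d2 / K); first by rewrite divr_gt0 // lt_min d10.
move=> t t0 td.
have tK : t * K < Num.min d1 d2 by rewrite -ltr_pdivlMr.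
have bnd : forall s, 0 <= s <= t -> `|s *: a + t *: b| <= t * (`|a| + `|b|).
  move=> s /andP[s0 st]; apply: (le_trans (ler_normD _ _)).
  rewrite !normrZ (ger0_norm s0) (gtr0_norm t0) mulrDr lerD2r.
  by rewrite ler_wpM2r.
have bnda : forall s, 0 <= s <= t -> `|s *: a| <= t * `|a|.
  move=> s /andP[s0 st]; rewrite normrZ (ger0_norm s0).
  by rewrite ler_wpM2r.
have lt1 : forall y, y <= t * (`|a| + `|b|) -> y < Num.min d1 d2.
  move=> y hy; apply: (le_lt_trans hy); apply: le_lt_trans tK.
  by rewrite ler_wpM2l ?(ltW t0) // /K lerDl.
have lta : t * `|a| <= t * (`|a| + `|b|) by rewrite ler_wpM2l ?(ltW t0) // lerDl.
pose g := fun s : R => f (s *: a + (t *: b + u)) - f (s *: a + u).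
pose dg := fun s : R => psi (s *: a + (t *: b + u)) - psi (s *: a + u).
have gder : forall s, 0 <= s <= t -> is_derive s 1 g (dg s).
  move=> s st; apply: is_deriveB; apply: line_is_derive.
    rewrite addrA; apply: H2.
    by have := lt1 _ (bnd s st); rewrite lt_min => /andP[].
  apply: H2.
  by have := lt1 _ (le_trans (bnda s st) lta); rewrite lt_min => /andP[].
have [c cin E] : exists2 c, c \in `[0, t]%R & g t - g 0 = dg c * (t - 0).
  apply: MVT_segment; first exact: ltW.
    by move=> s; rewrite in_itv /= => /andP[s0 st]; apply: gder; rewrite !ltW.
  apply: continuous_in_subspaceT => s; rewrite inE /= in_itv /= => st.
  have /gder [dd _] := st.
  by apply: differentiable_continuous; apply/derivable1_diffP.
have c01 : 0 <= c <= t by move: cin; rewrite in_itv.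
have Lb : 'D_b psi u = 'd psi u b by rewrite deriveE.
rewrite Lb.
have -> : f (t *: a + (t *: b + u)) - f (t *: a + u) - f (t *: b + u) + f u
   = t * dg c.
  have Eg : g t - g 0 = f (t *: a + (t *: b + u)) - f (t *: a + u) - f (t *: b + u) + f u.
    by rewrite /g !scale0r !add0r; ring.
  by rewrite -Eg E subr0 mulrC.
have h1lt : `|c *: a + t *: b| < d1.
  by have := lt1 _ (bnd c c01); rewrite lt_min => /andP[].
have h2lt : `|c *: a| < d1.
  by have := lt1 _ (le_trans (bnda c c01) lta); rewrite lt_min => /andP[].
have Hh1 := H1 _ h1lt.
have Hh2 := H1 _ h2lt.
have Ld : 'd psi u (c *: a + t *: b) = 'd psi u (c *: a) + t * 'd psi u b.
  rewrite linearD; congr (_ + _).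
  exact: linearZ.
have -> : t * dg c - t^+2 * 'd psi u b = t * ((psi (c *: a + t *: b + u) - psi u
    - 'd psi u (c *: a + t *: b)) - (psi (c *: a + u) - psi u - 'd psi u (c *: a))).
  rewrite Ld /dg !addrA; ring.
rewrite normrM gtr0_norm //.
apply: (le_trans (ler_wpM2l (ltW t0) (ler_normB _ _))).
apply: (le_trans (ler_wpM2l (ltW t0) (lerD Hh1 Hh2))).
rewrite -mulrDr.
have hs : `|c *: a + t *: b| + `|c *: a| <= t * C.
  have := bnd c c01; have := bnda c c01; rewrite /C => q1 q2.
  have : 0 <= `|a| by []. have : 0 <= `|b| by [].
  nra.
have eC : 0 <= e / C by rewrite divr_ge0 // ltW.
apply: (le_trans (ler_wpM2l (ltW t0) (ler_wpM2l eC hs))).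
have -> : t * (e / C * (t * C)) = e * t ^+ 2.
  by field; rewrite gt_eqF.
by [].
Qed.


Lemma schwarz (f : V -> R) (u a b : V) :
  (\forall w \near u, derivable f w a) -> (\forall w \near u, derivable f w b) ->
  differentiable ('D_a f) u -> differentiable ('D_b f) u ->
  'D_b ('D_a f) u = 'D_a ('D_b f) u.
Proof.
move=> Ha Hb Da Db.
apply/eqP; rewrite -subr_eq0 -normr_le0; apply/ler_addgt0Pr => e e0.
rewrite add0r.
have e20 : 0 < e / 2 by rewrite divr_gt0.
have [d1 d10 H1] := schwarz_half b Ha Da e20.
have [d2 d20 H2] := schwarz_half a Hb Db e20.
set t := Num.min d1 d2 / 2.
have t0 : 0 < t by rewrite divr_gt0 // lt_min d10.
have tm : t < Num.min d1 d2 by rewrite /t ltr_pdivrMr // ltr_pMr // ?lt_min ?d10 // ltr1n.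
have td1 : t < d1 by move: tm; rewrite lt_min => /andP[].
have td2 : t < d2 by move: tm; rewrite lt_min => /andP[].
have := H1 t t0 td1; have := H2 t t0 td2.
have -> : f (t *: b + (t *: a + u)) = f (t *: a + (t *: b + u)) by rewrite addrCA.
set X := 'D_b ('D_a f) u; set Y := 'D_a ('D_b f) u.
set F1 := f (t *: a + (t *: b + u)); set F2 := f (t *: a + u); set F3 := f (t *: b + u).
move=> q2 q1.
have q := lerD q1 q2.
have : `|t ^+ 2 * (X - Y)| <= e * t ^+ 2.
  have -> : t ^+ 2 * (X - Y) = (F1 - F3 - F2 + f u - t ^+ 2 * Y) - (F1 - F2 - F3 + f u - t ^+ 2 * X) by ring.
  apply: le_trans (ler_normB _ _) _.
  rewrite addrC; apply: le_trans q _.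
  by rewrite -mulrDl -splitr.
rewrite normrM ger0_norm ?exprn_ge0 ?(ltW t0) // mulrC ler_pM2r //.
by rewrite exprn_gt0.
Qed.

End Schwarz.

Section NE.
Context {R : realType} {V W : normedModType R}.
Lemma near_eq_differentiable (f g : V -> W) x : differentiable f x ->
  (\forall y \near x, f y = g y) -> differentiable g x.
Proof.
move=> df fg.
have gx : f x = g x := nbhs_singleton fg.
have fg0 : \forall h \near 0, f (h + x) = g (h + x).
  by move/nbhs0P: fg; apply: filterS => h; rewrite addrC.
have E : g \o shift x = cst (g x) + 'd f x +o_ 0 id.
  apply/eqaddoP => eps e0.
  have := diff_locally df; move/eqaddoP => /(_ eps e0) H.
  move: H fg0; apply: filterS2 => h /= H1 H2.
  have -> : (g \o +%R^~ x - (cst (g x) + 'd f x)) h = g (h + x) - (g x + 'd f x h) by [].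
  have E1 : (f \o +%R^~ x - (cst (f x) + 'd f x)) h = f (h + x) - (f x + 'd f x h) by [].
  by rewrite -H2 -gx -E1.
have dg : 'd g x = 'd f x :> (V -> W) by apply: diff_unique => //; exact: diff_continuous.
by apply/diff_locallyP; rewrite dg; split => //; exact: diff_continuous.
Qed.
End NE.

Section Comp.
Context {R : realType} {V : normedModType R} {p q : nat}.
Implicit Types F : V -> 'M[R]_(p, q).

Lemma comp_derivable F w v i j : derivable F w v -> derivable (fun w => F w i j) w v.
Proof. by move=> H; apply: ((derivable_mxP F w v).1 H i j). Qed.

Lemma comp_derive F w v i j : derivable F w v -> 'D_v (fun w => F w i j) w = 'D_v F w i j.
Proof. by move=> H; rewrite (derive_mx H) mxE. Qed.

Lemma comp_differentiable F w i j : differentiable F w -> differentiable (fun w => F w i j) w.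
Proof.
move=> H; have -> : (fun w => F w i j) = (fun N : 'M[R]_(p, q) => N i j) \o F by [].
by apply: differentiable_comp => //; exact: differentiable_coord.
Qed.
End Comp.



Section SchwarzMx.
Context {R : realType} {V : normedModType R} {p q : nat}.
Implicit Types F : V -> 'M[R]_(p, q).

Lemma schwarz_mx F (u a b : V) : (\forall w \near u, differentiable F w) ->
  differentiable ('D_a F) u -> differentiable ('D_b F) u ->
  'D_b ('D_a F) u = 'D_a ('D_b F) u.
Proof.
move=> HF Da Db; apply/matrixP => i j.
have dA : derivable ('D_a F) u b by exact: diff_derivable.
have dB : derivable ('D_b F) u a by exact: diff_derivable.
pose f := fun w => F w i j.
have ea : \forall w \near u, 'D_a F w i j = 'D_a f w.
  by move: HF; apply: filterS => w dw; symmetry; apply: comp_derive; exact: diff_derivable.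
have eb : \forall w \near u, 'D_b F w i j = 'D_b f w.
  by move: HF; apply: filterS => w dw; symmetry; apply: comp_derive; exact: diff_derivable.
apply: (etrans (esym (comp_derive i j dA))).
apply: (etrans (near_eq_derive _ ea)).
apply: (etrans _ (comp_derive i j dB)).
apply: (etrans _ (esym (near_eq_derive _ eb))).
apply: schwarz.
- by move: HF; apply: filterS => w dw; apply: comp_derivable; exact: diff_derivable.
- by move: HF; apply: filterS => w dw; apply: comp_derivable; exact: diff_derivable.
- exact: (near_eq_differentiable (comp_differentiable i j Da) ea).
- exact: (near_eq_differentiable (comp_differentiable i j Db) eb).
Qed.
End SchwarzMx.


Section DerBig.
Context {R : realType} {V : normedModType R}.

Lemma is_derive_bigsum (I : Type) (r : seq I) (P : pred I) (F : I -> V -> R)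
  (dF : I -> R) (u v : V) :
  (forall i, P i -> is_derive u v (F i) (dF i)) ->
  is_derive u v (fun w => \sum_(i <- r | P i) F i w) (\sum_(i <- r | P i) dF i).
Proof.
move=> H; elim: r => [|i r IH].
  under eq_fun do rewrite big_nil. rewrite big_nil; exact: is_derive_cst.
rewrite big_cons; case: (boolP (P i)) => Pi.
  under eq_fun do rewrite big_cons Pi.
  exact: is_deriveD (H i Pi) IH.
by under eq_fun do rewrite big_cons (negbTE Pi).
Qed.

Lemma derivable_bigsum (I : Type) (r : seq I) (P : pred I) (F : I -> V -> R) (u v : V) :
  (forall i, P i -> derivable (F i) u v) ->
  derivable (fun w => \sum_(i <- r | P i) F i w) u v.
Proof.
move=> H; have := @is_derive_bigsum I r P F (fun i => 'D_v (F i) u) u v.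
by case=> // i Pi; apply: derivableP; apply: H.
Qed.

Lemma derive_bigsum (I : Type) (r : seq I) (P : pred I) (F : I -> V -> R) (u v : V) :
  (forall i, P i -> derivable (F i) u v) ->
  'D_v (fun w => \sum_(i <- r | P i) F i w) u = \sum_(i <- r | P i) 'D_v (F i) u.
Proof.
move=> H; have := @is_derive_bigsum I r P F (fun i => 'D_v (F i) u) u v.
by case=> // i Pi; apply: derivableP; apply: H.
Qed.

Lemma derivable_bigprod (I : Type) (r : seq I) (P : pred I) (F : I -> V -> R)
  (u v : V) :
  (forall i, P i -> derivable (F i) u v) ->
  derivable (fun w => \prod_(i <- r | P i) F i w) u v.
Proof.
move=> H; elim: r => [|i r IH].
  under eq_fun do rewrite big_nil. exact: derivable_cst.
case: (boolP (P i)) => Pi.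
  under eq_fun do rewrite big_cons Pi.
  exact: derivableM (H i Pi) IH.
by under eq_fun do rewrite big_cons (negbTE Pi).
Qed.

Lemma derivable_mull (c : R) (f : V -> R) u v : derivable f u v ->
  derivable (fun w => c * f w) u v.
Proof. by move=> H; exact: derivableM (derivable_cst c u v) H. Qed.

Lemma derivable_det k (A : V -> 'M[R]_k) u v :
  (forall i j, derivable (fun w => A w i j) u v) ->
  derivable (fun w => \det (A w)) u v.
Proof.
move=> H; rewrite /determinant.
apply: derivable_bigsum => s _; apply: derivable_mull.
by apply: derivable_bigprod => i _; apply: H.
Qed.

Lemma derivable_invmx k (A : V -> 'M[R]_k) u v a b :
  (\forall w \near u, A w \in unitmx) ->
  (forall i j, derivable (fun w => A w i j) u v) ->
  derivable (fun w => invmx (A w) a b) u v.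
Proof.
move=> HU H.
have E : \forall w \near u, (\det (A w))^-1 * \adj (A w) a b = invmx (A w) a b.
  move: HU; apply: filterS => w Hw; rewrite /invmx Hw. rewrite [RHS]mxE. done.
apply: (near_eq_derivable E).
apply: derivableM.
  apply: derivableV; last exact: derivable_det.
  by have := nbhs_singleton HU; rewrite unitmxE unitfE.
rewrite /=; under eq_fun do rewrite mxE /cofactor.
apply: derivable_mull; apply: derivable_det => i j.
by under eq_fun do rewrite !mxE; exact: H.
Qed.
End DerBig.


Definition ip {R : realType} {N : nat} (rm : 'M[R]_N) (a b : 'rV[R]_N) : R :=
  \sum_(p < N) \sum_(q < N) rm p q * a 0 p * b 0 q.

Section IP.
Context {R : realType} {N : nat} (rm : 'M[R]_N).

Lemma ipE (a b : 'rV[R]_N) : (a *m rm *m b^T) 0 0 = ip rm a b.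
Proof.
rewrite mxE; under eq_bigr => q _ do rewrite !mxE big_distrl /=.
rewrite exchange_big; apply: eq_bigr => p _; apply: eq_bigr => q _ /=; ring.
Qed.

Lemma ip_sym (a b : 'rV[R]_N) : rm^T = rm -> ip rm a b = ip rm b a.
Proof.
move=> S; rewrite /ip exchange_big; apply: eq_bigr => p _; apply: eq_bigr => q _.
have -> : rm q p = rm p q by rewrite -{1}S mxE.
ring.
Qed.

Lemma ipDr (a b c : 'rV[R]_N) : ip rm a (b + c) = ip rm a b + ip rm a c.
Proof.
rewrite /ip -big_split; apply: eq_bigr => p _; rewrite -big_split.
by apply: eq_bigr => q _ /=; rewrite !mxE; ring.
Qed.

Lemma ipZr (a b : 'rV[R]_N) k : ip rm a (k *: b) = k * ip rm a b.
Proof.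
rewrite /ip big_distrr; apply: eq_bigr => p _; rewrite big_distrr.
by apply: eq_bigr => q _ /=; rewrite !mxE; ring.
Qed.

Lemma ip0r (a : 'rV[R]_N) : ip rm a 0 = 0.
Proof. by have := ipZr a 0 0; rewrite scale0r mul0r. Qed.

Lemma ipNr (a b : 'rV[R]_N) : ip rm a (- b) = - ip rm a b.
Proof. by rewrite -scaleN1r ipZr mulN1r. Qed.

Lemma ipBr (a b c : 'rV[R]_N) : ip rm a (b - c) = ip rm a b - ip rm a c.
Proof. by rewrite ipDr ipNr. Qed.

Lemma ip_sumr (a : 'rV[R]_N) K (F : 'I_K -> 'rV[R]_N) :
  ip rm a (\sum_(i < K) F i) = \sum_(i < K) ip rm a (F i).
Proof. exact: (big_morph (ip rm a) (ipDr a) (ip0r a)). Qed.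

End IP.


Section IPder.
Context {R : realType} {V : normedModType R} {N : nat} (rm : 'M[R]_N).

Lemma is_derive_comp (F : V -> 'rV[R]_N) w v p : derivable F w v ->
  is_derive w v (fun y => F y 0 p) ('D_v F w 0 p).
Proof. by move=> H; apply: DeriveDef; [exact: comp_derivable | exact: comp_derive]. Qed.

Lemma is_derive_mull (c : R) (f : V -> R) u v df : is_derive u v f df ->
  is_derive u v (fun w => c * f w) (c * df).
Proof.
move=> H; apply: (is_derive_eq (is_deriveM (is_derive_cst c u v) H)).
by rewrite /= scaler0 addr0.
Qed.

Lemma is_derive_ip (F H : V -> 'rV[R]_N) w v : derivable F w v -> derivable H w v ->
  is_derive w v (fun y => ip rm (F y) (H y))
    (ip rm ('D_v F w) (H w) + ip rm (F w) ('D_v H w)).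
Proof.
move=> dF dH; rewrite /ip.
apply: is_derive_eq.
  apply: is_derive_bigsum => p _; apply: is_derive_bigsum => q _.
  apply: is_deriveM; last exact: is_derive_comp.
  by apply: is_derive_mull; exact: is_derive_comp.
rewrite -big_split; apply: eq_bigr => p _; rewrite -big_split.
have sc : forall x y : R, x *: y = x * y by [].
by apply: eq_bigr => q _ /=; rewrite !sc; ring.
Qed.

Lemma derivable_ip (F H : V -> 'rV[R]_N) w v : derivable F w v -> derivable H w v ->
  derivable (fun y => ip rm (F y) (H y)) w v.
Proof. by move=> dF dH; case: (is_derive_ip dF dH). Qed.

Lemma derive_ip (F H : V -> 'rV[R]_N) w v : derivable F w v -> derivable H w v ->
  'D_v (fun y => ip rm (F y) (H y)) w = ip rm ('D_v F w) (H w) + ip rm (F w) ('D_v H w).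
Proof. by move=> dF dH; case: (is_derive_ip dF dH). Qed.
End IPder.

Section LinAlg.
Context {R : realType}.

Lemma free_of_ker p q (A : 'M[R]_(p, q)) :
  (forall z : 'rV_p, z *m A = 0 -> z = 0) -> row_free A.
Proof.
move=> H; rewrite -kermx_eq0; apply/eqP/row_matrixP => i; rewrite row0.
by apply: H; apply/sub_kermxP; exact: row_sub.
Qed.

Lemma ip_row N p q (A : 'M[R]_(p, N)) (B : 'M[R]_(q, N)) (rm : 'M[R]_N) a b :
  (A *m rm *m B^T) a b = ip rm (row a A) (row b B).
Proof.
rewrite -ipE !mxE; apply: eq_bigr => j _; rewrite !mxE; congr (_ * _).
by apply: eq_bigr => i _; rewrite !mxE.
Qed.

Lemma posdef_unit N (rm : 'M[R]_N) : (forall v, v != 0 -> 0 < ip rm v v) ->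
  rm \in unitmx.
Proof.
move=> Hp; rewrite -row_free_unit; apply: free_of_ker => z Hz.
apply/eqP; apply: contraT => nz; have := Hp z nz.
by rewrite -ipE Hz mul0mx mxE ltxx.
Qed.

Lemma gram_unit N k (rm : 'M[R]_N) (E : 'M[R]_(k, N)) :
  (forall v, v != 0 -> 0 < ip rm v v) -> row_free E ->
  (E *m rm *m E^T) \in unitmx.
Proof.
move=> Hp HE; rewrite -row_free_unit; apply: free_of_ker => z Hz.
have zE : z *m E = 0.
  apply/eqP; apply: contraT => nz; have := Hp _ nz; rewrite -ipE.
  have -> : (z *m E) *m rm *m (z *m E)^T = z *m (E *m rm *m E^T) *m z^T.
    by rewrite trmx_mul !mulmxA.
  by rewrite Hz mul0mx mxE ltxx.
by apply/eqP; rewrite -(mulmx_free_eq0 _ HE); apply/eqP.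
Qed.
End LinAlg.


Section Orth.
Context {R : realType}.

Lemma row1v N (v : 'rV[R]_N) (i : 'I_1) : row i v = v.
Proof. by rewrite [i]ord1; apply/rowP => j; rewrite mxE. Qed.

Lemma orth_zero k (rm : 'M[R]_k.+1) (E : 'M[R]_(k, k.+1)) (y D : 'rV[R]_(k.+1)) :
  rm^T = rm -> (forall v, v != 0 -> 0 < ip rm v v) -> row_free E ->
  ip rm y y != 0 -> (forall a, ip rm (row a E) y = 0) ->
  (forall a, ip rm D (row a E) = 0) -> ip rm D y = 0 -> D = 0.
Proof.
move=> S Hp HE yy Ey DE Dy.
pose M : 'M[R]_(k.+1) := col_mx y E.
have EyT : E *m rm *m y^T = 0.
  by apply/matrixP => a b; rewrite ip_row mxE row1v Ey.
have Mfree : row_free M.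
  apply: free_of_ker => z Hz.
  pose z1 : 'rV[R]_1 := lsubmx (z : 'rV[R]_(1 + k)).
  pose z2 : 'rV[R]_k := rsubmx (z : 'rV[R]_(1 + k)).
  have zM : z *m M = z1 *m y + z2 *m E.
    by rewrite -mul_row_col hsubmxK.
  have yyT : y *m rm *m y^T = (ip rm y y)%:M.
    by apply/matrixP => a b; rewrite [a]ord1 [b]ord1 ipE !mxE eqxx mulr1n.
  have z10 : z1 = 0.
    have : (z *m M) *m (rm *m y^T) = 0 by rewrite Hz mul0mx.
    rewrite zM mulmxDl -!mulmxA !(mulmxA y) !(mulmxA E) EyT mulmx0 addr0 yyT.
    by rewrite mul_mx_scalar => /eqP; rewrite scaler_eq0 (negbTE yy) /= => /eqP.
  have z20 : z2 = 0.
    apply/eqP; rewrite -(mulmx_free_eq0 _ HE); apply/eqP.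
    by move: Hz; rewrite zM z10 mul0mx add0r.
  by rewrite -[z](hsubmxK (z : 'rV[R]_(1 + k))) -/z1 -/z2 z10 z20 row_mx0.
have Mu : M \in unitmx by rewrite -row_free_unit.
have rmu : rm \in unitmx by apply: posdef_unit.
have MD : M *m (rm *m D^T) = 0.
  have -> : M *m (rm *m D^T) = col_mx (y *m (rm *m D^T)) (E *m (rm *m D^T)) := mul_col_mx y E (rm *m D^T).
  rewrite !mulmxA.
  have -> : y *m rm *m D^T = 0.
    apply/matrixP => a b; rewrite [a]ord1 [b]ord1 ipE ip_sym // Dy mxE.
    done.
  have -> : E *m rm *m D^T = 0.
    by apply/matrixP => a b; rewrite ip_row ip_sym // mxE row1v DE.
  by rewrite col_mx0.
have rD : rm *m D^T = 0 by rewrite -(mulKmx Mu (rm *m D^T)) MD mulmx0.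
have DT : D^T = 0 by rewrite -(mulKmx rmu D^T) rD mulmx0.
by apply: trmx_inj; rewrite DT trmx0.
Qed.
End Orth.

Unset Implicit Arguments.


HB.lock Definition E1 {R : realType} {m N : nat} (x : 'rV[R]_m -> 'rV[R]_N) (a : 'I_m) :
  'rV[R]_m -> 'rV[R]_N := 'D_(ecoord a) x.
HB.lock Definition E2 {R : realType} {m N : nat} (x : 'rV[R]_m -> 'rV[R]_N) (a b : 'I_m) :
  'rV[R]_m -> 'rV[R]_N := 'D_(ecoord a) (E1 x b).
HB.lock Definition E3 {R : realType} {m N : nat} (x : 'rV[R]_m -> 'rV[R]_N) (a b d : 'I_m) :
  'rV[R]_m -> 'rV[R]_N := 'D_(ecoord a) (E2 x b d).

HB.lock Definition pdL {R : realType} {m : nat} (i : 'I_m) (f : 'rV[R]_m -> R)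
  (u : 'rV[R]_m) : R := pd i f u.
HB.lock Definition chL {R : realType} {m : nat} (gam : 'rV[R]_m -> 'I_m -> 'I_m -> R)
  (i j k : 'I_m) (u : 'rV[R]_m) : R := christoffel gam i j k u.
HB.lock Definition gL {R : realType} {m N : nat} (g : R) (rm : 'M[R]_N)
  (x : 'rV[R]_m -> 'rV[R]_N) (u : 'rV[R]_m) (i j : 'I_m) : R :=
  induced_metric g rm x u i j.
Lemma pdE {R : realType} {m : nat} : @pd R m = @pdL R m.
Proof. by rewrite pdL.unlock. Qed.
Lemma chE {R : realType} {m : nat} : @christoffel R m = @chL R m.
Proof. by rewrite chL.unlock. Qed.
Lemma gE {R : realType} {m N : nat} : @induced_metric R m N = @gL R m N.
Proof. by rewrite gL.unlock. Qed.

Lemma riem_split (R : comRingType) K (G A B : 'I_K -> R) (P Q : 'I_K -> 'I_K -> R) (Y Z : 'I_K -> R) :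
  \sum_a G a * (A a - B a + \sum_b (P a b * Y b - Q a b * Z b)) =
  \sum_a G a * A a - \sum_a G a * B a + \sum_b (\sum_a G a * P a b) * Y b
   - \sum_b (\sum_a G a * Q a b) * Z b.
Proof.
have e1 : forall a, G a * (A a - B a + \sum_b (P a b * Y b - Q a b * Z b)) =
    (G a * A a - G a * B a) + (\sum_b G a * P a b * Y b - \sum_b G a * Q a b * Z b).
  move=> a; rewrite mulrDr mulrBr -sumrB big_distrr /=; congr (_ + _).
  by apply: eq_bigr => b _; ring.
rewrite (eq_bigr _ (fun a _ => e1 a)) big_split /=.
rewrite sumrB sumrB.
have -> : \sum_(b < K) (\sum_(a < K) G a * P a b) * Y b = \sum_a \sum_b G a * P a b * Y b.
  by rewrite exchange_big /=; apply: eq_bigr => b _; rewrite big_distrl.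
have -> : \sum_(b < K) (\sum_(a < K) G a * Q a b) * Z b = \sum_a \sum_b G a * Q a b * Z b.
  by rewrite exchange_big /=; apply: eq_bigr => b _; rewrite big_distrl.
by rewrite addrA.
Qed.

Section Wrap.
Context {R : realType} {m N : nat} (x : 'rV[R]_m -> 'rV[R]_N).
Lemma DxE a w : 'D_(ecoord a) x w = E1 x a w.
Proof. by rewrite E1.unlock. Qed.
Lemma DE1 a b w : 'D_(ecoord a) (E1 x b) w = E2 x a b w.
Proof. by rewrite E2.unlock. Qed.
Lemma DE2 a b d w : 'D_(ecoord a) (E2 x b d) w = E3 x a b d w.
Proof. by rewrite E3.unlock. Qed.
Lemma E1fun a : E1 x a = 'D_(ecoord a) x.
Proof. by rewrite E1.unlock. Qed.
Lemma E2fun a b : E2 x a b = 'D_(ecoord a) ('D_(ecoord b) x).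
Proof. by rewrite E2.unlock E1.unlock. Qed.
End Wrap.

Theorem theorem2p17 (R : realType) (n : nat) (rm : 'M[R]_(n.+2)) (g r : R)
  (U : set 'rV[R]_(n.+1)) (x : 'rV[R]_(n.+1) -> 'rV[R]_(n.+2)) :
  rm^T = rm ->
  (forall v : 'rV[R]_(n.+2), v != 0 -> 0 < (v *m rm *m v^T) 0 0) ->
  rm ord_max ord_max = 1 ->
  (forall a : 'I_(n.+2), a != ord_max -> rm ord_max a = 0) ->
  -2 < g < 2 ->
  0 < r ->
  open U ->
  smooth_on U x ->
  (forall u, U u -> Sfun rm (x u) = r) ->
  (forall u, U u -> row_free (chart_jacobian x u)) ->
  forall u, U u -> forall i j k l : 'I_(n.+1),
    riemann (induced_metric g rm x) i j k l u =
      hpar g ^+ 2 / r ^+ 2 *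
        (induced_metric g rm x u i k * induced_metric g rm x u j l
         - induced_metric g rm x u i l * induced_metric g rm x u j k).
Proof.
move=> rmS Hpd _ _ /andP[g1 g2] r0 oU Hs HS Hfree u Uu i j k l.
have Hp : forall v, v != 0 -> 0 < ip rm v v by move=> v nv; rewrite -ipE; exact: Hpd.
have hp0 : 0 < hpar g.
  rewrite /hpar sqrtr_gt0; nra.
pose c := (hpar g ^+ 2)^-1.
have c0 : 0 < c by rewrite /c invr_gt0 exprn_gt0.
have := Hs 1%N => /= -[dx _].
have := Hs 2%N => /= -[_ de0].
have de0' : forall v w, U w -> differentiable ('D_v x) w by move=> v w Uw; exact: (de0 v).1.
have de : forall a w, U w -> differentiable (E1 x a) w by move=> a w Uw; rewrite E1fun; exact: de0'.
have := Hs 3%N => /= -[_ dP0].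
have dP : forall a b w, U w -> differentiable (E2 x a b) w.
  by move=> a b w Uw; rewrite E2fun; exact: ((dP0 _).2 _).1.
clear de0 dP0.
have nearU : forall w, U w -> \forall y \near w, U y.
  by move=> w Uw; apply: open_nbhs_nbhs; split.
have xx : forall w, U w -> ip rm (x w) (x w) = r ^+ 2.
  move=> w Uw; have := HS w Uw; rewrite /Sfun -/(ip rm (x w) (x w)) => Hsq.
  case: (ltrP (ip rm (x w) (x w)) 0) => h.
    by move: Hsq; rewrite ltr0_sqrtr // => r00; move: r0; rewrite -r00 ltxx.
  by rewrite -Hsq sqr_sqrtr.
have xe : forall w, U w -> forall a, ip rm (x w) (E1 x a w) = 0.
  move=> w Uw a.
  have E : \forall y \near w, ip rm (x y) (x y) = r ^+ 2.
    by move: (nearU w Uw); apply: filterS => y Uy; apply: xx.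
  have := etrans (near_eq_derive (ecoord a) E) (derive_cst _ _ _).
  rewrite derive_ip; [|apply: diff_derivable; exact: dx|apply: diff_derivable; exact: dx].
  rewrite DxE (ip_sym _ _ rmS) => /eqP; rewrite -mulr2n -mulr_natr mulf_eq0.
  by rewrite pnatr_eq0 orbF => /eqP.
have LE : forall w, U w -> forall b,
    \sum_p Lvec rm (x w) p * E1 x b w 0 p = 0.
  move=> w Uw b; rewrite /Lvec.
  have -> : \sum_p (\sum_q rm p q * x w 0 q) / Sfun rm (x w) * E1 x b w 0 p
      = ip rm (E1 x b w) (x w) / Sfun rm (x w).
    rewrite /ip big_distrl /=; apply: eq_bigr => p _.
    rewrite mulrAC !big_distrl /=; apply: eq_bigr => q _; ring.
  by rewrite (ip_sym _ _ rmS) xe // mul0r.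
have gamE : forall w, U w -> forall a b, induced_metric g rm x w a b =
    c * ip rm (E1 x a w) (E1 x b w).
  move=> w Uw a b; rewrite /induced_metric /nmet /dchart !DxE.
  pose K := Gpar g ^+ 2 / 4.
  pose L := Lvec rm (x w).
  pose ea := E1 x a w. pose eb := E1 x b w.
  transitivity (\sum_p \sum_q (c * (rm p q * ea 0 p * eb 0 q)
                 - K * (L p * ea 0 p) * (L q * eb 0 q))).
    apply: eq_bigr => p _; apply: eq_bigr => q _; rewrite /c /K /L /ea /eb; ring.
  transitivity (\sum_p (c * \sum_q rm p q * ea 0 p * eb 0 q
                 - K * (L p * ea 0 p) * \sum_q (L q * eb 0 q))).
    by apply: eq_bigr => p _; rewrite sumrB !big_distrr.
  have E0 : \sum_q (L q * eb 0 q) = 0 := LE w Uw b.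
  rewrite E0.
  by rewrite /ip big_distrr /=; apply: eq_bigr => p _; rewrite mulr0 subr0.
have dgam : forall w, U w -> forall a b d,
  pd a (fun y => induced_metric g rm x y b d) w =
   c * (ip rm (E2 x a b w) (E1 x d w) + ip rm (E1 x b w) (E2 x a d w)).
  move=> w Uw a b d; rewrite /pd.
  have E : \forall y \near w, induced_metric g rm x y b d =
      c * ip rm (E1 x b y) (E1 x d y).
    by move: (nearU w Uw); apply: filterS => y Uy; apply: gamE.
  apply: (etrans (near_eq_derive _ E)).
  have d1 : derivable (E1 x b) w (ecoord a) by apply: diff_derivable; exact: de.
  have d2 : derivable (E1 x d) w (ecoord a) by apply: diff_derivable; exact: de.
  by have [_ ->] := is_derive_mull c (is_derive_ip rm d1 d2); rewrite !DE1.
have dgam_der : forall w, U w -> forall a b v,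
    derivable (fun y => induced_metric g rm x y a b) w v.
  move=> w Uw a b v.
  have E : \forall y \near w, c * ip rm (E1 x a y) (E1 x b y) =
      induced_metric g rm x y a b.
    by move: (nearU w Uw); apply: filterS => y Uy; rewrite gamE.
  apply: (near_eq_derivable E); apply: derivable_mull; apply: derivable_ip.
    by apply: diff_derivable; exact: de.
  by apply: diff_derivable; exact: de.
have Sch : forall w, U w -> forall a b, E2 x a b w = E2 x b a w.
  move=> w Uw a b; rewrite !E2fun; apply: schwarz_mx.
  - by move: (nearU w Uw); apply: filterS => y Uy; apply: dx.
  - exact: de0'.
  - exact: de0'.
have rowJ : forall w a, row a (chart_jacobian x w) = E1 x a w.
  by move=> w a; apply/rowP => p; rewrite !mxE /dchart DxE.
have Gunit : forall w, U w ->
    (\matrix_(a, b) induced_metric g rm x w a b) \in unitmx.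
  move=> w Uw.
  have -> : (\matrix_(a, b) induced_metric g rm x w a b) =
      c *: (chart_jacobian x w *m rm *m (chart_jacobian x w)^T).
    by apply/matrixP => a b; rewrite [LHS]mxE [RHS]mxE gamE // ip_row !rowJ.
  rewrite unitmxZ ?unitfE ?gt_eqF //; apply: gram_unit; [exact: Hp | exact: Hfree].
have ChrE : forall w, U w -> forall a b d,
    christoffel (induced_metric g rm x) a b d w =
    \sum_s metric_inv (induced_metric g rm x) w a s *
       (c * ip rm (E1 x s w) (E2 x b d w)).
  move=> w Uw a b d; rewrite /christoffel big_distrr /=; apply: eq_bigr => s _.
  rewrite (dgam w Uw b s d) (dgam w Uw d s b) (dgam w Uw s b d).
  rewrite (Sch w Uw b s) (Sch w Uw d s) (Sch w Uw d b).
  rewrite (ip_sym (E2 x s d w) _ rmS).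
  by field.
have I1 : forall w, U w -> forall a b d,
  \sum_t induced_metric g rm x w a t * christoffel (induced_metric g rm x) t b d w
    = c * ip rm (E1 x a w) (E2 x b d w).
  move=> w Uw a b d.
  transitivity (\sum_t \sum_s induced_metric g rm x w a t *
     (metric_inv (induced_metric g rm x) w t s * (c * ip rm (E1 x s w) (E2 x b d w)))).
    by apply: eq_bigr => t _; rewrite ChrE // big_distrr.
  rewrite exchange_big /=.
  have Minv := mulmxV (Gunit w Uw).
  transitivity (\sum_s ((\matrix_(a0, b0) induced_metric g rm x w a0 b0) *m
      metric_inv (induced_metric g rm x) w) a s * (c * ip rm (E1 x s w) (E2 x b d w))).
    apply: eq_bigr => s _; rewrite mxE big_distrl /=; apply: eq_bigr => t _.
    by rewrite mxE mulrA.
  rewrite /metric_inv Minv (bigD1 a) //= mxE eqxx mulr1n mul1r big1 ?addr0 // => t ta.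
  by rewrite mxE eq_sym (negbTE ta) mulr0n mul0r.
have dinv : forall a b v,
    derivable (fun y => metric_inv (induced_metric g rm x) y a b) u v.
  move=> a b v.
  apply: (derivable_invmx (A := fun y => \matrix_(a0, b0) induced_metric g rm x y a0 b0)).
  - by move: (nearU u Uu); apply: filterS => y Uy; exact: Gunit.
  - by move=> a0 b0; under eq_fun do rewrite mxE; exact: dgam_der.
have dE1 : forall a v, derivable (E1 x a) u v.
  by move=> a v; apply: diff_derivable; exact: de.
have dE2 : forall a b v, derivable (E2 x a b) u v.
  by move=> a b v; apply: diff_derivable; exact: dP.
have dChr : forall a b d v,
    derivable (fun y => christoffel (induced_metric g rm x) a b d y) u v.
  move=> a b d v.
  have E : \forall y \near u, \sum_s metric_inv (induced_metric g rm x) y a s *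
       (c * ip rm (E1 x s y) (E2 x b d y)) = christoffel (induced_metric g rm x) a b d y.
    by move: (nearU u Uu); apply: filterS => y Uy; rewrite ChrE.
  apply: (near_eq_derivable E); apply: derivable_bigsum => s _.
  apply: derivableM; first exact: dinv.
  by apply: derivable_mull; apply: derivable_ip.
have I2 : forall kk a b d,
  \sum_t (induced_metric g rm x u a t *
          pd kk (fun y => christoffel (induced_metric g rm x) t b d y) u
        + christoffel (induced_metric g rm x) t b d u *
          pd kk (fun y => induced_metric g rm x y a t) u)
  = c * (ip rm (E2 x kk a u) (E2 x b d u) + ip rm (E1 x a u) (E3 x kk b d u)).
  move=> kk a b d.
  have E : \forall y \near u, \sum_t induced_metric g rm x y a t *
        christoffel (induced_metric g rm x) t b d y = c * ip rm (E1 x a y) (E2 x b d y).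
    by move: (nearU u Uu); apply: filterS => y Uy; apply: I1.
  have H1 : is_derive u (ecoord kk) (fun y => \sum_t induced_metric g rm x y a t *
        christoffel (induced_metric g rm x) t b d y)
     (\sum_t (induced_metric g rm x u a t *
          pd kk (fun y => christoffel (induced_metric g rm x) t b d y) u
        + christoffel (induced_metric g rm x) t b d u *
          pd kk (fun y => induced_metric g rm x y a t) u)).
    apply: is_derive_bigsum => t _.
    apply: is_derive_eq.
      by apply: is_deriveM; apply: derivableP; [exact: dgam_der | exact: dChr].
    by [].
  have H2 : is_derive u (ecoord kk) (fun y => c * ip rm (E1 x a y) (E2 x b d y))
     (c * (ip rm (E2 x kk a u) (E2 x b d u) + ip rm (E1 x a u) (E3 x kk b d u))).
    apply: is_derive_eq.
      by apply: is_derive_mull; apply: is_derive_ip; [exact: dE1 | exact: dE2].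
    by rewrite DE1 DE2.
  case: H1 => _ <-; case: H2 => _ <-.
  exact: near_eq_derive.
have T3 : E3 x k l j u = E3 x l k j u.
  rewrite E3.unlock E2.unlock; apply: schwarz_mx.
  - by move: (nearU u Uu); apply: filterS => y Uy; apply: de.
  - by have := dP l j u Uu; rewrite E2.unlock.
  - by have := dP k j u Uu; rewrite E2.unlock.
have ipPx : forall a b, ip rm (E2 x a b u) (x u) = - ip rm (E1 x a u) (E1 x b u).
  move=> a b.
  have E : \forall y \near u, ip rm (x y) (E1 x b y) = 0.
    by move: (nearU u Uu); apply: filterS => y Uy; apply: xe.
  have := etrans (near_eq_derive (ecoord a) E) (derive_cst _ _ _).
  rewrite derive_ip; [|apply: diff_derivable; exact: dx|exact: dE1].
  rewrite DxE DE1 => D.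
  rewrite (ip_sym _ _ rmS); apply/eqP; rewrite -addr_eq0 addrC; apply/eqP; exact: D.
have KEY : forall a b, E2 x a b u =
    \sum_t christoffel (induced_metric g rm x) t a b u *: E1 x t u
    - (ip rm (E1 x a u) (E1 x b u) / r ^+ 2) *: x u.
  move=> a b.
  pose S := \sum_t christoffel (induced_metric g rm x) t a b u *: E1 x t u.
  pose q := ip rm (E1 x a u) (E1 x b u) / r ^+ 2.
  have I1' : forall t, \sum_s ip rm (E1 x t u) (E1 x s u) *
      christoffel (induced_metric g rm x) s a b u = ip rm (E1 x t u) (E2 x a b u).
    move=> t; apply: (mulfI (lt0r_neq0 c0)); rewrite -(I1 u Uu t a b) big_distrr /=.
    by apply: eq_bigr => s _; rewrite gamE // mulrA.
  have ipS : forall z, ip rm z S = \sum_t christoffel (induced_metric g rm x) t a b u *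
      ip rm z (E1 x t u).
    by move=> z; rewrite ip_sumr; apply: eq_bigr => t _; rewrite ipZr.
  have HD : E2 x a b u - (S - q *: x u) = 0.
    apply: (orth_zero (E := chart_jacobian x u) (y := x u) rmS Hp (Hfree u Uu)).
    - by rewrite xx // expf_neq0 // gt_eqF.
    - by move=> t; rewrite rowJ (ip_sym _ _ rmS) xe.
    - move=> t; rewrite rowJ (ip_sym _ _ rmS) ipBr ipBr ipZr ipS.
      rewrite (ip_sym (E1 x t u) (x u) rmS) xe // mulr0 subr0.
      rewrite -I1' -sumrB big1 // => s _; rewrite mulrC subrr //.
    - rewrite (ip_sym _ _ rmS) ipBr ipBr ipZr ipS (ip_sym (x u) (E2 x a b u) rmS).
      rewrite ipPx xx // big1 ?sub0r; last by move=> t _; rewrite xe // mulr0.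
      by rewrite /q; field; rewrite gt_eqF.
  by apply/eqP; rewrite -subr_eq0 HD.
rewrite /riemann.
move: I2 dgam I1 gamE KEY; rewrite pdE chE gE => I2 dgam I1 gamE KEY.
pose Zs := fun kk ll => \sum_a chL (gL g rm x) a ll j u * ip rm (E2 x kk i u) (E1 x a u).
pose Ws := fun kk ll => \sum_a chL (gL g rm x) a ll j u * ip rm (E1 x i u) (E2 x kk a u).
have SAe : forall kk ll, \sum_a gL g rm x u i a * pdL kk (fun w => chL (gL g rm x) a ll j w) u
    = c * (ip rm (E2 x kk i u) (E2 x ll j u) + ip rm (E1 x i u) (E3 x kk ll j u))
      - c * Zs kk ll - c * Ws kk ll.
  move=> kk ll; have H := I2 kk i ll j; rewrite big_split /= in H.
  have H' : \sum_a chL (gL g rm x) a ll j u * pdL kk (fun y => gL g rm x y i a) u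
      = c * Zs kk ll + c * Ws kk ll.
    rewrite /Zs /Ws !big_distrr -big_split /=; apply: eq_bigr => a _.
    rewrite dgam //; ring.
  rewrite H' in H; rewrite -H; ring.
have SCe : forall kk ll, \sum_b (\sum_a gL g rm x u i a * chL (gL g rm x) a kk b u) *
    chL (gL g rm x) b ll j u = c * Ws kk ll.
  move=> kk ll; rewrite /Ws big_distrr /=; apply: eq_bigr => b _.
  rewrite I1 //; ring.
have PZ : forall kk ll, ip rm (E2 x kk i u) (E2 x ll j u) =
    Zs kk ll + ip rm (E1 x ll u) (E1 x j u) / r ^+ 2 * ip rm (E1 x kk u) (E1 x i u).
  move=> kk ll; rewrite (KEY ll j) ipBr ipZr ip_sumr ipPx /Zs.
  under eq_bigr do rewrite ipZr.
  ring.
apply: (etrans (riem_split _ _ (fun a => gL g rm x u i a)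
  (fun a => pdL k (fun w => chL (gL g rm x) a l j w) u)
  (fun a => pdL l (fun w => chL (gL g rm x) a k j w) u)
  (fun a b => chL (gL g rm x) a k b u) (fun a b => chL (gL g rm x) a l b u)
  (fun b => chL (gL g rm x) b l j u) (fun b => chL (gL g rm x) b k j u))).
cbv beta.
rewrite (SAe k l) (SAe l k) (SCe k l) (SCe l k) (PZ k l) (PZ l k) T3.
rewrite !(gamE u Uu).
rewrite (ip_sym (E1 x k u) (E1 x i u) rmS) (ip_sym (E1 x l u) (E1 x j u) rmS).
rewrite (ip_sym (E1 x k u) (E1 x j u) rmS) (ip_sym (E1 x l u) (E1 x i u) rmS).
rewrite /c; field.
by rewrite gt_eqF // gt_eqF.
Qed.
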